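(* For every positive integer $a$, $\Gamma(a,2a)=1$; for every integer $a\ge 2$, $\Gamma(a,2a-1)=2$.
   Context: For relatively prime positive integers $p,q$, exactly one of the equations $px+qy=\frac{(p-1)(q-1)}{2}$ (Equation 1) and $px+qy+1=\frac{(p-1)(q-1)}{2}$ (Equation 2) has a solution in nonnegative integers $(x,y)$. For positive integers $a,b$ with $d=\gcd(a,b)$, $\Gamma(a,b)=1$ if Equation 1 with $(p,q)=(a/d,b/d)$ has a nonnegative integer solution, and $\Gamma(a,b)=2$ otherwise. *)

(* Defs.v *)
From mathcomp Require Import all_boot.
From mathcomp Require Import boolp.

(* Equation 1 for relatively prime p, q:
   p x + q y = (p-1)(q-1)/2 has a solution in nonnegative integers.
   For coprime p, q the product (p-1)(q-1) is even, so ./2 is exact division. *)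
Definition eq1_solvable (p q : nat) : Prop :=
  exists x y : nat, p * x + q * y = ((p - 1) * (q - 1))./2.

Definition Gamma (a b : nat) : nat :=
  let d := gcdn a b in
  if `[< eq1_solvable (a %/ d) (b %/ d) >] then 1 else 2.

(* Main.v *)
Require Import Defs.
From mathcomp Require Import all_boot.
From mathcomp Require Import boolp zify.

Theorem corollary2p1 :
  (forall a : nat, 0 < a -> Gamma a (2 * a) = 1) /\
  (forall a : nat, 2 <= a -> Gamma a (2 * a - 1) = 2).
Proof.
split.
- move=> a a0; rewrite /Gamma.
  have -> : gcdn a (2 * a) = a by rewrite gcdnC gcdnC gcdnMl.
  case: asboolP => // H; exfalso; apply: H.
  rewrite mulnK // divnn a0.
  by exists 0, 0.
- move=> a a2; rewrite /Gamma.
  have g1 : gcdn a (2 * a - 1) = 1.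
    apply/eqP; rewrite -dvdn1.
    have h1 : gcdn a (2 * a - 1) %| 2 * a by apply: dvdn_mull; exact: dvdn_gcdl.
    have := dvdn_sub h1 (dvdn_gcdr a (2 * a - 1)).
    by have -> : 2 * a - (2 * a - 1) = 1 by lia.
  rewrite g1 !divn1.
  case: asboolP => // [[x [y H]]].
  have e : ((a - 1) * (2 * a - 1 - 1))./2 = (a - 1) * (a - 1).
    have -> : (a - 1) * (2 * a - 1 - 1) = ((a - 1) * (a - 1)).*2 by rewrite -muln2; lia.
    by rewrite doubleK.
  rewrite e in H.
  have hy : y < a - 1.
    rewrite ltnNge; apply/negP => hy.
    have h1 : (2 * a - 1) * (a - 1) <= (2 * a - 1) * y by apply: leq_mul.
    have h2 : (a - 1) * (a - 1) < (2 * a - 1) * (a - 1).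
      rewrite ltn_mul2r; apply/andP; split; lia.
    lia.
  have hk : a * (x + 2 * y + 2) = a * a + y + 1.
    have e2 : 2 * a - 1 = a + (a - 1) by lia.
    rewrite e2 mulnDl in H.
    have hsq : (a - 1) * (a - 1) + a + a = a * a + 1.
      case: a a2 {H e hy g1 e2} => // b _; rewrite subn1 /= mulSn mulnS; lia.
    lia.
  case: (leqP (x + 2 * y + 2) a) => hc.
    have := leq_mul (leqnn a) hc; lia.
  have := leq_mul (leqnn a) hc; rewrite mulnS; lia.
Qed.
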